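(* Let $\mathbf{w} = (w_1, w_2, \ldots)$ be an arbitrary sequence of elements of $A^+$ (with $A=\{a,b\}$) such that $a \notin S_{\mathbf{w}}$ and $b \notin S_{\mathbf{w}}$. Then either $w_n \in aA^*b$ for all $n$ and $S_{\mathbf{w}} \subseteq aA^*b \cup \{\varepsilon\}$, or $w_n \in bA^*a$ for all $n$ and $S_{\mathbf{w}} \subseteq bA^*a \cup \{\varepsilon\}$.
   Context: $A = \{a,b\}$; $A^*$ is the free monoid on $A$ with empty word $\varepsilon$, and $A^+ = A^*\setminus\{\varepsilon\}$. For a sequence $\mathbf{w}=(w_1,w_2,\ldots)$ in $A^+$, $S_{\mathbf{w}}$ is the least submonoid $S$ of $A^*$ satisfying: (C1) if $w_n = s v u v s'$ for some $n$, with $s, s' \in S$ and $u, v \in A^*$, then $v \in S$; (C2) if $w_m = s v t$ and $w_n = t' v s'$ for some $m \neq n$, with $s, s' \in S$ and $t, t', v \in A^*$, then $v \in S$. (Intersections of such submonoids again satisfy (C1),(C2), and $A^*$ satisfies them, so the least one exists.) *)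

(* Defs.v *)
From mathcomp Require Import all_boot.
Set Implicit Arguments. Unset Strict Implicit. Unset Printing Implicit Defensive.

Inductive letter := la | lb.

Definition word := seq letter.

Definition submonoid (S : word -> Prop) : Prop :=
  S [::] /\ forall u v, S u -> S v -> S (u ++ v).

Definition cond1 (w : nat -> word) (S : word -> Prop) : Prop :=
  forall n (s s' u v : word), S s -> S s' ->
    w n = s ++ v ++ u ++ v ++ s' -> S v.

Definition cond2 (w : nat -> word) (S : word -> Prop) : Prop :=
  forall m n (s s' t t' v : word), m <> n -> S s -> S s' ->
    w m = s ++ v ++ t -> w n = t' ++ v ++ s' -> S v.

(* S_w : the least submonoid satisfying (C1) and (C2), i.e. the intersection
   of all of them. *)
Definition Sw (w : nat -> word) (x : word) : Prop :=
  forall S : word -> Prop, submonoid S -> cond1 w S -> cond2 w S -> S x.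

Definition in_cAd (c d : letter) (x : word) : Prop :=
  exists y : word, x = c :: y ++ [:: d].

(* Main.v *)
Require Import Defs.
From mathcomp Require Import all_boot.
From Stdlib Require Import Lia.

Lemma Sw_sub w : submonoid (Sw w).
Proof.
split; first by move=> S [H0 _] _ _.
move=> u v Hu Hv S HS H1 H2; case: (HS) => _ HS'; apply: HS'.
  by apply: Hu. by apply: Hv.
Qed.

Lemma Sw_c1 w : cond1 w (Sw w).
Proof.
move=> n s s' u v Hs Hs' E S HS H1 H2.
by apply: (H1 n s s' u v) => //; [apply: Hs | apply: Hs'].
Qed.

Lemma Sw_c2 w : cond2 w (Sw w).
Proof.
move=> m n s s' t t' v Hmn Hs Hs' E1 E2 S HS H1 H2.
by apply: (H2 m n s s' t t' v) => //; [apply: Hs | apply: Hs'].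
Qed.

Lemma let3 (x y z : letter) : x <> y -> x <> z -> y = z.
Proof. by case: x; case: y; case: z. Qed.

Lemma letdec (x y : letter) : x = y \/ x <> y.
Proof. by case: x; case: y; auto; right. Qed.

Lemma gen (w : nat -> word) (c d : letter) : c <> d ->
  (forall n, in_cAd c d (w n)) -> ~ Sw w [:: c] -> ~ Sw w [:: d] ->
  forall x, Sw w x -> in_cAd c d x \/ x = [::].
Proof.
move=> cd Hw Hc Hd.
have S0 : Sw w [::] by case: (Sw_sub w).
have KP : forall n s e t, Sw w s -> w n = s ++ e :: t -> e = c.
  move=> n s e t Hs E.
  case: (letdec e c) => // ne.
  have ed : e = d by apply: (let3 c) => // H; apply: ne.
  subst e; exfalso; apply: Hd.
  case: (Hw n.+1) => y Ey.
  apply: (Sw_c2 w n n.+1 s [::] t (c :: y)) => //.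
have KS : forall n s e t, Sw w s -> w n = t ++ e :: s -> e = d.
  move=> n s e t Hs E.
  case: (letdec e d) => // ne.
  have ed : e = c by apply: (let3 d) => H; [apply: ne | apply: cd]; rewrite H.
  subst e; exfalso; apply: Hc.
  case: (Hw n.+1) => y Ey.
  apply: (Sw_c2 w n.+1 n [::] s (y ++ [:: d]) t) => //.
  by move=> /esym; apply: n_Sn.
have shape : forall v, v <> [::] -> (forall e t, v = e :: t -> e = c) ->
    (forall e t, v = t ++ [:: e] -> e = d) -> in_cAd c d v.
  case=> [//|e v1] _ H1 H2.
  have ec := H1 _ _ (erefl _); subst e.
  case/lastP: v1 H1 H2 => [|v2 e'] _ H2.
    by exfalso; apply: cd; apply: (H2 c [::]).
  exists v2; rewrite -cats1; congr (_ :: _ ++ _).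
  by rewrite (H2 e' (c :: v2)) // -cats1.
pose S' x := Sw w x /\ (in_cAd c d x \/ x = [::]).
suff : forall x, Sw w x -> S' x by move=> H x /H [].
move=> x Hx; apply: (Hx S').
- split; first by split => //; right.
  move=> u v [Hu Ou] [Hv Ov]; split; first by case: (Sw_sub w) => _; apply.
  case: Ou => [[y ->]|->] //; case: Ov => [[z ->]|->]; last by rewrite cats0; left; exists y.
  left; exists (y ++ d :: c :: z); by rewrite /= -!catA.
- move=> n s s' u v [Hs _] [Hs' _] E; split; first by apply: (Sw_c1 w _ _ _ _ _ Hs Hs' E).
  have [->|nv] : v = [::] \/ v <> [::] by clear; case: v; [left|right].
  by right. left.
  apply: shape => //.
    move=> e t Ev; subst v; apply: (KP n s e (t ++ u ++ (e :: t) ++ s') Hs).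
    by rewrite E.
  move=> e t Ev; subst v; apply: (KS n s' e (s ++ (t ++ [:: e]) ++ u ++ t) Hs').
  by rewrite E -!catA.
- move=> m n s s' t t' v mn [Hs _] [Hs' _] E1 E2; split; first by apply: (Sw_c2 w _ _ _ _ _ _ _ mn Hs Hs' E1 E2).
  have [->|nv] : v = [::] \/ v <> [::] by clear; case: v; [left|right].
  by right. left.
  apply: shape => //.
    move=> e t0 Ev; subst v; apply: (KP m s e (t0 ++ t) Hs).
    by rewrite E1.
  move=> e t0 Ev; subst v; apply: (KS n s' e (t' ++ t0) Hs').
  by rewrite E2 -!catA.
Qed.

Theorem lemma3p4 (w : nat -> word) :
  (forall n, w n <> [::]) ->
  ~ Sw w [:: la] -> ~ Sw w [:: lb] ->
  ((forall n, in_cAd la lb (w n)) /\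
     (forall x, Sw w x -> in_cAd la lb x \/ x = [::]))
  \/
  ((forall n, in_cAd lb la (w n)) /\
     (forall x, Sw w x -> in_cAd lb la x \/ x = [::])).
Proof.
move=> Hne Ha Hb.
have NL : forall e, ~ Sw w [:: e] by case.
have S0 : Sw w [::] by case: (Sw_sub w).
have F1 : forall m n e f y z, m <> n -> w m = e :: y -> w n = z ++ [:: f] -> e <> f.
  move=> m n e f y z mn Em En ef; subst f; apply: (NL e).
  apply: (Sw_c2 w m n [::] [::] y z [:: e]) => //; by rewrite En.
have F2 : forall n e f y, w n = e :: y ++ [:: f] -> e <> f.
  move=> n e f y En ef; subst f; apply: (NL e).
  apply: (Sw_c1 w n [::] [::] y [:: e]) => //; by rewrite En cats0.
have Fdec : forall k, exists e f y z, w k = e :: y /\ w k = z ++ [:: f].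
  move=> k; case E: (w k) => [|e y]; first by case: (Hne k).
  case/lastP: y E => [|z f] E.
    by exists e, e, [::], [::].
  exists e, f, (rcons z f), (e :: z); split => //.
  by rewrite -cats1.
have NS : forall n e, w n <> [:: e].
  move=> n e En.
  case: (Fdec n.+1) => ep [fp [yp [zp [Ep1 Ep2]]]].
  case: (Fdec n.+2) => eq [fq [yq [zq [Eq1 Eq2]]]].
  have h1 : ep <> e.
    apply: (F1 n.+1 n ep e yp [::]) => //; lia.
  have h2 : e <> fq.
    apply: (F1 n n.+2 e fq [::] zq) => //; lia.
  have h3 : ep <> fq.
    apply: (F1 n.+1 n.+2 ep fq yp zq) => //; lia.
  by apply: h3; apply: (let3 e) => // H; apply: h1.
have D : forall n, exists e f y, w n = e :: y ++ [:: f].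
  move=> n; case E: (w n) => [|e y]; first by case: (Hne n).
  case/lastP: y E => [|z f] E; first by case: (NS n e).
  by exists e, f, z; rewrite -cats1.
case: (D 0) => c [d [y0 E0]].
have cd : c <> d by apply: F2 E0.
have Hw : forall n, in_cAd c d (w n).
  case=> [|n]; first by exists y0.
  case: (D n.+1) => e [f [y E]]; exists y.
  have ed : e <> d.
    apply: (F1 n.+1 0 e d (y ++ [:: f]) (c :: y0)) => //; rewrite ?E0 -?cats1 //.
  have fc : c <> f.
    apply: (F1 0 n.+1 c f (y0 ++ [:: d]) (e :: y)) => //; rewrite ?E //.
  rewrite E.
  have -> : e = c by apply: (let3 d) => H; [apply: ed | apply: cd]; rewrite H.
  have -> : f = d by apply: (let3 c).
  done.
move: (gen w c d cd Hw (NL c) (NL d)) => G.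
case: c d cd Hw G {E0} => [] [] // _ Hw G; [left | right]; split => //.
Qed.
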